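(* Let $\mathcal{H}_A,\mathcal{H}_B$ have finite dimensions $d_A,d_B$, and put $d=\min\{d_A,d_B\}$, $D=\max\{d_A,d_B\}$. Let $\{P_k^A\}_{k=1}^{d^2}$ be a regular, coherent, degree-1 quantum design with $r=1$ in dimension $d_A$ having $d^2$ elements, and $\{P_k^B\}_{k=1}^{d^2}$ a regular, coherent, degree-1 quantum design with $r=1$ in dimension $d_B$ having $d^2$ elements. Define $$\rho=\frac{1}{d^2}\sum_{k=1}^{d^2}P_k^A\otimes P_k^B.$$ Then the operator-Schmidt coefficients of $\rho$ are $\alpha=1/\sqrt{Dd}$ with multiplicity one and $\beta=\sqrt{\frac{D-1}{D(d^2-1)}\cdot\frac{d-1}{d(d^2-1)}}$ with multiplicity $d^2-1$.
   Context: A quantum design in dimension $b$ with $v$ elements is a set of $v$ orthogonal projections $\{P_k\}_{k=1}^v$ on $\mathbb{C}^b$. It is regular with $r=1$ if every $P_k$ has rank one; coherent if $\sum_k P_k$ is a scalar multiple of the identity; and of degree 1 if there is $\mu\in\mathbb{R}$ with $\mathrm{tr}(P_kP_l)=\mu$ for all $k\ne l$. The operator-Schmidt decomposition of a state $\rho$ on $\mathcal{H}_A\otimes\mathcal{H}_B$ is a decomposition $\rho=\sum_{k=1}^{d^2}\lambda_k G_k\otimes H_k$ with real $\lambda_k\ge0$, where $\{G_k\}$ and $\{H_k\}$ are orthonormal sets (w.r.t. the Hilbert–Schmidt inner product $\mathrm{tr}(XY)$) of Hermitian operators on $\mathcal{H}_A$ and $\mathcal{H}_B$ respectively; the $\lambda_k$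 (with multiplicity) are the operator-Schmidt coefficients. Equivalently, they are the singular values of the correlation matrix $\mathcal{C}_{ij}=\mathrm{tr}(\rho\,A_i\otimes B_j)$ for orthonormal bases $\{A_i\}$, $\{B_j\}$ of the Hermitian operators on $\mathcal{H}_A$, $\mathcal{H}_B$. *)

(* Defs.v *)
From HB Require Import structures.
From mathcomp Require Import all_boot all_order all_algebra.
From mathcomp Require Import mxtens.
Set Implicit Arguments. Unset Strict Implicit. Unset Printing Implicit Defensive.
Import Order.TTheory GRing.Theory Num.Theory.
Local Open Scope ring_scope.

Section Defs.
Variable C : numClosedFieldType.

Definition adjmx (n : nat) (A : 'M[C]_n) : 'M[C]_n := map_mx Num.conj A^T.

Definition hermitian (n : nat) (A : 'M[C]_n) : Prop := adjmx A = A.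

Definition orth_proj (n : nat) (P : 'M[C]_n) : Prop :=
  hermitian P /\ P *m P = P.

Definition quantum_design (b v : nat) (P : 'I_v -> 'M[C]_b) : Prop :=
  forall k, orth_proj (P k).

Definition regular_r1 (b v : nat) (P : 'I_v -> 'M[C]_b) : Prop :=
  forall k, \rank (P k) = 1%N.

Definition coherent (b v : nat) (P : 'I_v -> 'M[C]_b) : Prop :=
  exists c : C, \sum_k P k = c%:M.

Definition degree1 (b v : nat) (P : 'I_v -> 'M[C]_b) : Prop :=
  exists mu : C, mu \is Num.real /\
    forall k l, k != l -> \tr (P k *m P l) = mu.

Definition orthonormal_herm (n v : nat) (G : 'I_v -> 'M[C]_n) : Prop :=
  (forall k, hermitian (G k)) /\
  (forall k l, \tr (G k *m G l) = (k == l)%:R).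

Definition os_decomposition (dA dB : nat) (rho : 'M[C]_(dA * dB))
  (lam : 'I_((minn dA dB) ^ 2) -> C)
  (G : 'I_((minn dA dB) ^ 2) -> 'M[C]_dA)
  (H : 'I_((minn dA dB) ^ 2) -> 'M[C]_dB) : Prop :=
  (forall k, 0 <= lam k) /\ orthonormal_herm G /\ orthonormal_herm H /\
  rho = \sum_k lam k *: (G k *t H k).

Definition os_coefficients_are (dA dB : nat) (rho : 'M[C]_(dA * dB))
  (s : seq C) : Prop :=
  (exists lam G H, @os_decomposition dA dB rho lam G H /\
     perm_eq [seq lam k | k <- enum 'I_((minn dA dB) ^ 2)] s) /\
  (forall lam G H, @os_decomposition dA dB rho lam G H ->
     perm_eq [seq lam k | k <- enum 'I_((minn dA dB) ^ 2)] s).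

End Defs.

(* Main.v *)
Require Import Defs.
From HB Require Import structures.
From mathcomp Require Import all_boot all_order all_algebra.
From mathcomp Require Import mxtens.
From mathcomp Require Import ring lra.
Set Implicit Arguments. Unset Strict Implicit. Unset Printing Implicit Defensive.
Import Order.TTheory GRing.Theory Num.Theory.
Local Open Scope ring_scope.

Section S.
Variable C : numClosedFieldType.


Lemma sum_delta n (F : 'I_n -> C) i : \sum_j F j * (j == i)%:R = F i.
Proof.
rewrite (bigD1 i) //= eqxx mulr1 big1 ?addr0 // => j /negbTE ->.
by rewrite mulr0.
Qed.

Lemma sum_delta' n (F : 'I_n -> C) i : \sum_j F j * (i == j)%:R = F i.
Proof. by under eq_bigr => j _ do rewrite eq_sym; exact: sum_delta. Qed.

Lemma tensZl m n p q (c : C) (A : 'M[C]_(m, n)) (B : 'M[C]_(p, q)) :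
  (c *: A) *t B = c *: (A *t B).
Proof. by apply/matrixP => i j; rewrite !mxE mulrA. Qed.

Lemma tensZr m n p q (c : C) (A : 'M[C]_(m, n)) (B : 'M[C]_(p, q)) :
  A *t (c *: B) = c *: (A *t B).
Proof. by apply/matrixP => i j; rewrite !mxE mulrCA. Qed.

Lemma tens_suml N m n p q (A : 'I_N -> 'M[C]_(m, n)) (B : 'M[C]_(p, q)) :
  (\sum_k A k) *t B = \sum_k (A k *t B).
Proof.
apply/matrixP => i j; rewrite !mxE summxE summxE mulr_suml.
by apply: eq_bigr => k _; rewrite mxE.
Qed.

Lemma tens_sumr N m n p q (A : 'M[C]_(m, n)) (B : 'I_N -> 'M[C]_(p, q)) :
  A *t (\sum_k B k) = \sum_k (A *t B k).
Proof.
apply/matrixP => i j; rewrite !mxE summxE summxE mulr_sumr.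
by apply: eq_bigr => k _; rewrite mxE.
Qed.

Lemma tr_tens m p (A : 'M[C]_m) (B : 'M[C]_p) : \tr (A *t B) = \tr A * \tr B.
Proof.
rewrite /mxtrace mulr_sum; apply: eq_bigr => i _; by rewrite mxE.
Qed.

Lemma tr_dec n m p (lam : 'I_n -> C) (G : 'I_n -> 'M[C]_m) (H : 'I_n -> 'M[C]_p) X Y :
  \tr ((\sum_k lam k *: (G k *t H k)) *m (X *t Y)) =
  \sum_k lam k * (\tr (G k *m X) * \tr (H k *m Y)).
Proof.
rewrite mulmx_suml raddf_sum; apply: eq_bigr => k _.
by rewrite -scalemxAl /= mxtraceZ tensmx_mul tr_tens.
Qed.

Lemma tr_idem_rank m (P : 'M[C]_m) : P *m P = P -> \tr P = (\rank P)%:R.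
Proof.
move=> PP.
have eP := mulmx_base P.
rewrite -{1}eP mxtrace_mulC -mxtrace1.
move: (col_base P) (row_base P) (row_base_free P) eP (col_base_full P).
move=> c r rfree eP cfull; congr (\tr _).
have [B hB] := row_fullP cfull.
apply: (row_free_inj rfree); rewrite mul1mx.
have E : c *m (r *m c) *m r = c *m r by rewrite mulmxA -mulmxA eP PP.
have := congr1 (mulmx B) E.
by rewrite !mulmxA hB !mul1mx.
Qed.

Lemma design_facts m n (P : 'I_n -> 'M[C]_m) : (0 < n)%N ->
  quantum_design P -> regular_r1 P -> coherent P -> degree1 P ->
  exists mu c : C, mu \is Num.real /\
    (forall k l, \tr (P k *m P l) = if k == l then 1 else mu) /\
    \sum_k P k = c%:M /\ n%:R = c * m%:R /\ 1 + (n.-1)%:R * mu = c.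
Proof.
move=> n0 hq hr [c hc] [mu [mur hmu]].
have tr1 k : \tr (P k) = 1.
  by rewrite tr_idem_rank ?hr //; case: (hq k).
have hG k l : \tr (P k *m P l) = if k == l then 1 else mu.
  case: eqP => [<-|/eqP]; last exact: hmu.
  by case: (hq k) => _ ->; apply: tr1.
exists mu, c; split => //; split => //; split => //; split.
  have := congr1 mxtrace hc; rewrite raddf_sum /= mxtrace_scalar.
  under eq_bigr => k _ do rewrite tr1.
  by rewrite sumr_const card_ord mulr_natr => ->.
pose k0 := Ordinal n0.
have := congr1 (fun M => \tr (P k0 *m M)) hc => /=.
rewrite mulmx_sumr raddf_sum /= mul_mx_scalar mxtraceZ tr1 mulr1 => <-.
rewrite (bigD1 k0) //= hG eqxx; congr (_ + _).
under eq_bigr => l hl do rewrite hG eq_sym (negbTE hl).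
by rewrite sumr_const cardC1 card_ord mulr_natl.
Qed.


Lemma uniq_core n dA dB (a : 'I_n -> 'M[C]_dA) (b : 'I_n -> 'M[C]_dB)
  (GA GB : 'M[C]_n) (lam : 'I_n -> C) (G : 'I_n -> 'M[C]_dA) (H : 'I_n -> 'M[C]_dB) :
  (0 < n)%N -> (forall k l, \tr (a k *m a l) = GA k l) -> (forall k l, \tr (b k *m b l) = GB k l) ->
  GA \in unitmx -> GB \in unitmx ->
  (forall k l, \tr (G k *m G l) = (k == l)%:R) ->
  (forall k l, \tr (H k *m H l) = (k == l)%:R) ->
  n%:R^-1 *: \sum_k (a k *t b k) = \sum_k lam k *: (G k *t H k) ->
  exists U : 'M[C]_n, U \in unitmx /\
    diag_mx (\row_i (lam i ^+ 2)) *m U = U *m ((n%:R ^+ 2)^-1 *: (GB *m GA)).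
Proof.
move=> n0 hA hB uA uB hG hH hrho.
have nz : n%:R != 0 :> C by rewrite pnatr_eq0 -lt0n.
have K X Y : \sum_j lam j * (\tr (G j *m X) * \tr (H j *m Y)) =
             \sum_k n%:R^-1 * (\tr (a k *m X) * \tr (b k *m Y)).
  by rewrite -tr_dec -hrho scaler_sumr tr_dec.
pose U := \matrix_(i, k) \tr (G i *m a k).
pose V := \matrix_(i, k) \tr (H i *m b k).
pose L := diag_mx (\row_i lam i).
have E1 : L *m V = n%:R^-1 *: (U *m GB).
  apply/matrixP => i q; rewrite mul_diag_mx !mxE.
  have := K (G i) (b q).
  under eq_bigr => j _ do rewrite hG mulrCA mulrC.
  rewrite sum_delta => ->; rewrite mulr_sumr; apply: eq_bigr => k _.
  by rewrite !mxE hB mxtrace_mulC.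
have E2 : L *m U = n%:R^-1 *: (V *m GA).
  apply/matrixP => l p; rewrite mul_diag_mx !mxE.
  have := K (a p) (H l).
  under eq_bigr => j _ do rewrite hH mulrA.
  rewrite sum_delta => ->; rewrite mulr_sumr; apply: eq_bigr => k _.
  by rewrite /V !mxE -hA; congr (_ * _); rewrite mulrC mxtrace_mulC.
exists U; split.
  rewrite -unitmx_tr -row_free_unit -kermx_eq0; apply/eqP/row_matrixP => i.
  rewrite row0; set x := row i _.
  have : x *m U^T = 0 by apply/sub_kermxP; rewrite row_sub.
  move=> hx.
  pose Z := \sum_k x 0 k *: a k.
  have hZ j : \tr (G j *m Z) = 0.
    have := congr1 (fun M : 'rV[C]_n => M 0 j) hx; rewrite !mxE => <-.
    rewrite mulmx_sumr raddf_sum /=; apply: eq_bigr => k _.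
    by rewrite -scalemxAr mxtraceZ !mxE mulrC.
  pose y := \row_k \tr (a k *m Z).
  have hy : y *m GB = 0.
    apply/rowP => q; rewrite !mxE.
    have := K Z (b q).
    under eq_bigr => j _ do rewrite hZ mul0r mulr0.
    rewrite big1 // => /esym /eqP; rewrite -mulr_sumr mulf_eq0 invr_eq0.
    rewrite (negbTE nz) /= => /eqP E; rewrite -[RHS]E.
    by apply: eq_bigr => k _; rewrite mxE hB.
  have y0 : y = 0 by rewrite -(mulmxK uB y) hy mul0mx.
  have uA' : GA^T \in unitmx by rewrite unitmx_tr.
  have : x *m GA^T = 0.
    apply/rowP => k; have := congr1 (fun M : 'rV[C]_n => M 0 k) y0.
    rewrite !mxE => E; rewrite -[RHS]E.
    rewrite mulmx_sumr raddf_sum /=; apply: eq_bigr => l _.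
    by rewrite -scalemxAr mxtraceZ hA !mxE.
  by move=> h; rewrite -(mulmxK uA' x) h mul0mx.
have -> : diag_mx (\row_i lam i ^+ 2) *m U = L *m (L *m U).
  by apply/matrixP => i j; rewrite !mul_diag_mx !mxE expr2 mulrA.
rewrite E2 -scalemxAr mulmxA E1 -scalemxAl scalerA -scalemxAr -mulmxA.
by rewrite -expr2 exprVn.
Qed.


Definition Jmx n : 'M[C]_n := const_mx 1.

Lemma JJ n : Jmx n *m Jmx n = n%:R *: Jmx n.
Proof.
apply/matrixP => i j; rewrite !mxE.
under eq_bigr do rewrite !mxE mulr1.
by rewrite sumr_const card_ord mulr1.
Qed.

Lemma prodSJ n (s a t b : C) :
  (s%:M + a *: Jmx n) *m (t%:M + b *: Jmx n) =
  (s * t)%:M + (s * b + a * t + a * b * n%:R) *: Jmx n.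
Proof.
rewrite mulmxDl !mulmxDr !mul_scalar_mx -!scalemxAl -!scalemxAr mul_mx_scalar.
rewrite JJ scale_scalar_mx !scalerA.
apply/matrixP => i j; rewrite !mxE.
case: (i == j); rewrite /= ?mulr1n ?mulr0n; ring.
Qed.

Lemma row_unit_nz n (U : 'M[C]_n) i : U \in unitmx -> exists j, U i j != 0.
Proof.
move=> uU; apply/existsP; apply: contraT; rewrite negb_exists => /forallP h.
have : row i U = 0.
  by apply/rowP => j; rewrite !mxE; apply/eqP; move: (h j); rewrite negbK.
move=> h0.
have : row i U = 0 *m U by rewrite h0 mul0mx.
have rf : row_free U by rewrite row_free_unit.
rewrite rowE; move/(row_free_inj rf)/matrixP/(_ 0 i).
by rewrite !mxE !eqxx /= => /eqP; rewrite oner_eq0.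
Qed.

Lemma spec_count n (lam : 'I_n -> C) (U : 'M[C]_n) (p q : C) :
  U \in unitmx ->
  diag_mx (\row_i (lam i ^+ 2)) *m U = U *m (p%:M + q *: Jmx n) ->
  (forall i, (lam i ^+ 2 - (p + n%:R * q)) * (lam i ^+ 2 - p) = 0) /\
  \sum_i lam i ^+ 2 = n%:R * (p + q).
Proof.
move=> uU hDU; split.
  move=> i.
  have e j : lam i ^+ 2 * U i j = p * U i j + q * \sum_k U i k.
    have := congr1 (fun M : 'M[C]_n => M i j) hDU.
    rewrite mulmxDr mul_mx_scalar -scalemxAr mul_diag_mx !mxE => ->.
    congr (_ + _); congr (_ * _); apply: eq_bigr => k _; rewrite !mxE mulr1 //.
  have eR : (lam i ^+ 2 - (p + n%:R * q)) * \sum_k U i k = 0.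
    rewrite mulrBl mulr_sumr.
    under eq_bigr do rewrite e.
    rewrite big_split /= -mulr_sumr sumr_const card_ord -mulr_natl; ring.
  have [j hj] := row_unit_nz i uU.
  apply/eqP; rewrite -(mulIr_eq0 _ (mulIf hj)); apply/eqP.
  rewrite -mulrA (_ : (lam i ^+ 2 - p) * U i j = q * \sum_k U i k).
    by rewrite mulrCA eR mulr0.
  by rewrite mulrBl e; ring.
have hD : diag_mx (\row_i (lam i ^+ 2)) = U *m (p%:M + q *: Jmx n) *m invmx U.
  by rewrite -hDU mulmxK.
have -> : \sum_i lam i ^+ 2 = \tr (diag_mx (\row_i (lam i ^+ 2))).
  by rewrite mxtrace_diag; apply: eq_bigr => i _; rewrite mxE.
rewrite hD -mulmxA mxtrace_mulC mulmxKV // /mxtrace.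
under eq_bigr do rewrite !mxE eqxx mulr1n.
by rewrite sumr_const card_ord mulr1 mulr_natl.
Qed.


Lemma build_dec n dA dB (a : 'I_n -> 'M[C]_dA) (b : 'I_n -> 'M[C]_dB)
  (O : 'M[C]_n) (sA sB : 'I_n -> C) :
  (forall j, sA j != 0) -> (forall j, sB j != 0) -> (0 < n)%N ->
  (forall i j, O i j = O j i) -> (forall i j, \sum_k O i k * O k j = (i == j)%:R) ->
  n%:R^-1 *: \sum_k (a k *t b k) =
  \sum_j (sA j * sB j / n%:R) *:
     (((sA j)^-1 *: \sum_k O j k *: a k) *t ((sB j)^-1 *: \sum_k O j k *: b k)).
Proof.
move=> hA hB n0 Os Oo.
have nz : n%:R != 0 :> C by rewrite pnatr_eq0 -lt0n.
have E j : (sA j * sB j / n%:R) *: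
     (((sA j)^-1 *: \sum_k O j k *: a k) *t ((sB j)^-1 *: \sum_k O j k *: b k))
   = n%:R^-1 *: \sum_k \sum_l (O j k * O j l) *: (a k *t b l).
  rewrite tensZl tensZr !scalerA.
  have -> : sA j * sB j / n%:R / sA j / sB j = n%:R^-1.
    by field; rewrite hA hB nz.
  congr (_ *: _); rewrite tens_suml; apply: eq_bigr => k _.
  rewrite tens_sumr; apply: eq_bigr => l _.
  by rewrite tensZl tensZr scalerA.
under [RHS]eq_bigr do rewrite E.
rewrite -scaler_sumr; congr (_ *: _).
rewrite exchange_big /=; apply: eq_bigr => k _.
rewrite exchange_big /=.
rewrite (bigD1 k) //= [X in _ + X]big1 ?addr0.
  rewrite -scaler_suml.
  under eq_bigr => j _ do rewrite {1}(Os j k).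
  by rewrite Oo eqxx scale1r.
move=> l lk; rewrite -scaler_suml.
under eq_bigr => j _ do rewrite (Os j k).
by rewrite Oo eq_sym (negbTE lk) scale0r.
Qed.



Lemma sq_inj (x y : C) : 0 <= x -> 0 <= y -> x ^+ 2 = y ^+ 2 -> x = y.
Proof. by move=> hx hy /eqP; rewrite eqrXn2 // => /eqP. Qed.

Lemma two_vals (a b : C) (L : seq C) : a != b ->
  all (fun x => (x == a) || (x == b)) L ->
  [/\ perm_eq L (nseq (count_mem a L) a ++ nseq (count_mem b L) b),
      (count_mem a L + count_mem b L = size L)%N &
      \sum_(x <- L) x ^+ 2 = (count_mem a L)%:R * a ^+ 2 + (count_mem b L)%:R * b ^+ 2].
Proof.
move=> ab; elim: L => [|x L IH] /=.
  by rewrite big_nil !mul0r addr0.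
move=> /andP [hx hL]; have [p c s] := IH hL.
have ba : (b == a) = false by rewrite eq_sym (negbTE ab).
case/orP: hx => /eqP ->; rewrite big_cons s eqxx ?ba ?(negbTE ab) /=.
  rewrite !add0n; split; [by rewrite perm_cons | by rewrite add1n addSn c |].
  rewrite natrD; ring.
rewrite !add0n; split; [|by rewrite add1n addnS c|rewrite natrD; ring].
rewrite perm_sym (perm_catCA (nseq _ a) [:: b] (nseq _ b)) /= perm_cons perm_sym.
exact: p.
Qed.

Lemma seq_perm (L : seq C) (al be : C) :
  0 <= al -> (0 < size L)%N -> ((1 < size L)%N -> 0 <= be) ->
  (forall x, x \in L -> 0 <= x /\ (x ^+ 2 = al ^+ 2 \/ x ^+ 2 = be ^+ 2)) ->
  \sum_(x <- L) x ^+ 2 = al ^+ 2 + (size L).-1%:R * be ^+ 2 ->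
  perm_eq L (al :: nseq (size L).-1 be).
Proof.
move=> al0 sz0 be0 hL hs.
case: (ltnP 1 (size L)) => [sz1|sz1]; last first.
  have sz : size L = 1%N by apply/eqP; rewrite eqn_leq sz1 sz0.
  case: L sz hL hs {sz0 sz1 be0} => [|x [|y L]] //= _ hL.
  rewrite big_cons big_nil addr0 mul0r addr0 => hx.
  have x0 : 0 <= x by case: (hL x); rewrite ?mem_head.
  by rewrite (sq_inj x0 al0 hx).
have be0' := be0 sz1.
have vals : all (fun x => (x == al) || (x == be)) L.
  apply/allP => x xL; have [x0 [h|h]] := hL x xL.
    by rewrite (sq_inj x0 al0 h) eqxx.
  by rewrite (sq_inj x0 be0' h) eqxx orbT.
have [ab|ab] := eqVneq al be.
  subst be.
  have : all (pred1 al) L by apply: sub_all vals => x /=; rewrite orbb.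
  move/all_pred1P => {1}->.
  by case: (size L) sz1.
have [p c s] := two_vals ab vals.
move: s hs p c; set ca := count_mem al L; set cb := count_mem be L.
move=> -> hs p c.
have sq : al ^+ 2 != be ^+ 2 by rewrite eqrXn2.
have e := prednK sz0.
have hsz : ca%:R + cb%:R = (size L).-1%:R + 1 :> C.
  by rewrite -natrD c -{1}e -addn1 natrD.
have h0 : (ca%:R - 1) * (al ^+ 2 - be ^+ 2) = 0 :> C.
  have -> : (ca%:R - 1) * (al ^+ 2 - be ^+ 2) =
     (ca%:R * al ^+ 2 + cb%:R * be ^+ 2) -
     (al ^+ 2 + ((ca%:R + cb%:R) - 1) * be ^+ 2) :> C by ring.
  by rewrite hs hsz addrK subrr.
have ca1 : ca = 1%N.
  move/eqP: h0; rewrite mulf_eq0 subr_eq0 [X in _ || X]subr_eq0 (negbTE sq) orbF.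
  by rewrite pnatr_eq1 => /eqP.
rewrite ca1 in p c.
by rewrite -c add1n /=.
Qed.



Lemma householder n (i0 : 'I_n) : exists O : 'M[C]_n,
  [/\ forall i j, O i j \is Num.real, forall i j, O i j = O j i,
      forall i j, \sum_k O i k * O k j = (i == j)%:R &
      forall i, \sum_k O i k = sqrtC n%:R * (i == i0)%:R].
Proof.
set r := sqrtC n%:R.
have r2 : r ^+ 2 = n%:R by rewrite sqrtCK.
have rr : r \is Num.real by rewrite ger0_real // sqrtC_ge0 ler0n.
pose w k := r * (k == i0)%:R - 1.
have wr k : w k \is Num.real by rewrite rpredB ?rpredM ?rpred_nat ?rpred1.
pose q := \sum_k w k ^+ 2.
have hq : q = 2 * n%:R - 2 * r.
  rewrite /q.
  have e k : w k ^+ 2 = r ^+ 2 * (k == i0)%:R - 2 * r * (k == i0)%:R + 1.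
    by rewrite /w; case: (k == i0); rewrite /= ?mulr1 ?mulr0; ring.
  under eq_bigr do rewrite e.
  rewrite big_split sumrB /= !sum_delta sumr_const card_ord r2; ring.
have hw : \sum_k w k = r - n%:R.
  rewrite /w sumrB /= sum_delta sumr_const card_ord; ring.
pose t := 2 / q.
have tq : t ^+ 2 * q = 2 * t.
  have [q0|q0] := eqVneq q 0.
    by rewrite /t q0 invr0 mulr0; ring.
  by rewrite /t; field.
have tr : t \is Num.real by rewrite rpredM ?rpredV ?hq ?rpredB ?rpredM ?rpred_nat.
pose O := \matrix_(i, j) ((i == j)%:R - t * w i * w j) : 'M[C]_n.
exists O; split.
- move=> i j; rewrite mxE; apply: rpredB; first exact: rpred_nat.
  by apply: rpredM; [apply: rpredM|].

- by move=> i j; rewrite !mxE eq_sym; congr (_ - _); ring.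
- move=> i j.
  have E k : O i k * O k j = (i == k)%:R * (k == j)%:R
      - t * w j * (w k * (i == k)%:R) - t * w i * (w k * (k == j)%:R)
      + t ^+ 2 * w i * w j * w k ^+ 2.
    rewrite !mxE.
    case: (i == k); case: (k == j); rewrite /= ?mulr1 ?mulr0; ring.
  under eq_bigr do rewrite E.
  rewrite big_split sumrB sumrB /= sum_delta.
  rewrite -!mulr_sumr sum_delta' sum_delta -/q.
  have -> : t ^+ 2 * w i * w j * q = (t ^+ 2 * q) * w i * w j by ring.
  rewrite tq; ring.
- move=> i.
  have E k : O i k = (i == k)%:R - t * w i * w k by rewrite mxE.
  under eq_bigr do rewrite E.
  rewrite sumrB -mulr_sumr hw.
  have s1 : \sum_k ((i == k)%:R : C) = 1.
    by rewrite (bigD1 i) //= eqxx big1 ?addr0 // => k; rewrite eq_sym => /negbTE ->.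
  rewrite s1.
  have [q0|q0] := eqVneq q 0.
    have rn : r = n%:R.
      apply/eqP; rewrite -subr_eq0.
      have : 2 * (n%:R - r) = 0 :> C by rewrite -q0 hq; ring.
      by move/eqP; rewrite mulf_eq0 pnatr_eq0 /= -opprB oppr_eq0.
    have n0 : (0 < n)%N by apply: leq_ltn_trans (ltn_ord i0).
    have n1 : n = 1%N.
      have : (n%:R : C) * (n%:R - 1) = 0 by rewrite mulrBr mulr1 -expr2 -{1}rn r2 subrr.
      move/eqP; rewrite mulf_eq0 pnatr_eq0 (gtn_eqF n0) /= subr_eq0 pnatr_eq1.
      by move/eqP.
    have ii0 : i == i0.
      have h1 : (i < 1)%N by rewrite -[1%N]n1 ltn_ord.
      have h2 : (i0 < 1)%N by rewrite -[1%N]n1 ltn_ord.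
      apply/eqP/val_inj => /=; move: h1 h2; rewrite !ltnS !leqn0 => /eqP -> /eqP ->; done.
    by rewrite ii0 rn subrr mulr0 subr0 mulr1 n1.
  have -> : t * w i * (r - n%:R) = - w i.
    rewrite /t hq; field.
    by rewrite -hq.
  by rewrite /w opprK; ring.
Qed.


Lemma hermP m (A : 'M[C]_m) : Defs.hermitian A <-> forall i j, Num.conj (A j i) = A i j.
Proof.
split => [h i j|h].
  by move/matrixP: h => /(_ i j); rewrite !mxE.
by apply/matrixP => i j; rewrite !mxE h.
Qed.

Lemma herm_comb m n (P : 'I_n -> 'M[C]_m) (x : C) (y : 'I_n -> C) :
  (forall k, Defs.hermitian (P k)) -> x \is Num.real -> (forall k, y k \is Num.real) ->
  Defs.hermitian (x *: \sum_k y k *: P k).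
Proof.
move=> hP xr yr; apply/hermP => i j.
rewrite !mxE !summxE rmorphM rmorph_sum /= conj_Creal //; congr (_ * _).
apply: eq_bigr => k _; rewrite !mxE rmorphM /= conj_Creal //.
by have /hermP -> := hP k.
Qed.

Lemma tr_comb m n (P : 'I_n -> 'M[C]_m) (x x' : C) (y y' : 'I_n -> C) :
  \tr ((x *: \sum_k y k *: P k) *m (x' *: \sum_k y' k *: P k)) =
  x * x' * \sum_k \sum_l y k * y' l * \tr (P k *m P l).
Proof.
rewrite -scalemxAl -scalemxAr !mxtraceZ mulrA; congr (_ * _).
rewrite mulmx_suml raddf_sum /=; apply: eq_bigr => k _.
rewrite -scalemxAl mulmx_sumr mxtraceZ raddf_sum /= mulr_sumr.
apply: eq_bigr => l _; rewrite -scalemxAr mxtraceZ; ring.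
Qed.

Lemma build_G m n (P : 'I_n -> 'M[C]_m) (O : 'M[C]_n) (i0 : 'I_n) (mu c : C) :
  (forall k, Defs.hermitian (P k)) ->
  (forall k l, \tr (P k *m P l) = if k == l then 1 else mu) ->
  1 + (n.-1)%:R * mu = c -> (0 < n)%N -> 0 < c -> 0 < 1 - mu ->
  (forall i j, O i j \is Num.real) -> (forall i j, O i j = O j i) ->
  (forall i j, \sum_k O i k * O k j = (i == j)%:R) ->
  (forall i, \sum_k O i k = sqrtC n%:R * (i == i0)%:R) ->
  let s j := if j == i0 then sqrtC c else sqrtC (1 - mu) in
  (forall j, Defs.hermitian ((s j)^-1 *: \sum_k O j k *: P k)) /\
  (forall i j, \tr (((s i)^-1 *: \sum_k O i k *: P k) *m
                    ((s j)^-1 *: \sum_k O j k *: P k)) = (i == j)%:R).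
Proof.
move=> hP hG hc n0 c0 mu0 Or Os Oo Or1 s.
have sr j : s j \is Num.real.
  by rewrite /s; case: (j == i0); apply: ger0_real; rewrite sqrtC_ge0 ltW.
have s2 j : s j ^+ 2 = if j == i0 then c else 1 - mu.
  by rewrite /s; case: (j == i0); rewrite sqrtCK.
have snz j : s j != 0.
  apply/eqP => h; have := s2 j; rewrite h expr0n /=.
  by case: (j == i0) => e; move: c0 mu0; rewrite -e ltxx.
split.
  by move=> j; apply: herm_comb => //; rewrite rpredV.
move=> i j; rewrite tr_comb.
have E k l : O i k * O j l * \tr (P k *m P l) =
   (1 - mu) * (O i k * O k j * (k == l)%:R) + mu * (O i k * O j l).
  rewrite hG; case: eqP => [<-|_]; rewrite /= ?mulr1 ?mulr0.
    rewrite (Os j k); ring.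
  ring.
under eq_bigr do under eq_bigr do rewrite E.
have E2 k : \sum_l ((1 - mu) * (O i k * O k j * (k == l)%:R) + mu * (O i k * O j l))
   = (1 - mu) * (O i k * O k j) + mu * O i k * \sum_l O j l.
  rewrite big_split /= -mulr_sumr (sum_delta' (fun _ => O i k * O k j)).
  by congr (_ + _); rewrite -!mulr_sumr mulrA.
under eq_bigr do rewrite E2.
rewrite big_split /= -mulr_sumr Oo -mulr_suml -mulr_sumr Or1 Or1.
have n1 : (n.-1)%:R = n%:R - 1 :> C by rewrite -[n in RHS](prednK n0) -addn1 natrD addrK.
rewrite n1 in hc.
have e2 : sqrtC n%:R ^+ 2 = n%:R :> C by rewrite sqrtCK.
have sV j' : (s j')^-1 * (s j')^-1 * s j' ^+ 2 = 1.
  by rewrite expr2; field; rewrite snz.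
case: (eqVneq i j) => [<-|ij].
  rewrite -[RHS](sV i); congr (_ * _); rewrite s2 /= mulr1.
  case: (i == i0); rewrite /= ?mulr1 ?mulr0 ?addr0 //.
  rewrite -hc -mulrA -expr2 e2; ring.
rewrite /= mulr0 add0r.
case: (eqVneq i i0) => [ii|ii]; first case: (eqVneq j i0) => [jj|jj].
- by move: ij; rewrite ii jj eqxx.
- by rewrite /= !mulr0.
- by rewrite /= !mulr0 !mul0r mulr0.
Qed.



End S.

Section S2.
Variable C : numClosedFieldType.

Lemma predn_natr (n : nat) : (0 < n)%N -> (n.-1)%:R = n%:R - 1 :> C.
Proof. by move=> n0; rewrite -[n in RHS](prednK n0) -addn1 natrD addrK. Qed.

Lemma design_norm m n (P : 'I_n -> 'M[C]_m) : (0 < m)%N -> (0 < n)%N ->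
  (m = 1%N -> n = 1%N) ->
  quantum_design P -> regular_r1 P -> coherent P -> degree1 P ->
  exists mu c : C, [/\ (forall k l, \tr (P k *m P l) = if k == l then 1 else mu),
    1 + (n.-1)%:R * mu = c, c = n%:R / m%:R, 0 < 1 - mu &
    (n.-1)%:R * (1 - mu) = n%:R * (m.-1)%:R / m%:R].
Proof.
move=> m0 n0 m1 hq hr hc hd.
have [mu [c [_ [hG [_ [hn hc1]]]]]] := design_facts n0 hq hr hc hd.
have mz : m%:R != 0 :> C by rewrite pnatr_eq0 -lt0n.
have cE : c = n%:R / m%:R by rewrite hn; field.
have [n1|n1] := eqVneq n 1%N.
  have c1 : c = 1 by rewrite -hc1 n1 mul0r addr0.
  have mE : m = 1%N.
    have hm : m%:R = 1 :> C.
      move: cE; rewrite c1 n1 mul1r => h.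
      by rewrite -[LHS]invrK -h invr1.
    by apply/eqP; rewrite -(pnatr_eq1 C) hm.
  exists 0, c; split.
  - move=> k l; rewrite hG; case: eqP => // /eqP kl.
    exfalso; move: kl; apply/negP; rewrite negbK.
    have h1 : (k < 1)%N by rewrite -[1%N]n1 ltn_ord.
    have h2 : (l < 1)%N by rewrite -[1%N]n1 ltn_ord.
    apply/eqP/val_inj => /=; move: h1 h2; rewrite !ltnS !leqn0 => /eqP -> /eqP ->; done.
  - by rewrite n1 mul0r addr0.
  - exact: cE.
  - by rewrite subr0 ltr01.
  - by rewrite n1 mE !mul0r mulr0 mul0r.
have n2 : (1 < n)%N by rewrite ltn_neqAle eq_sym n1 n0.
have m2 : (1 < m)%N.
  rewrite ltn_neqAle m0 andbT; apply/eqP => m1'.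
  by move: n1; rewrite m1 // eqxx.
have formula : (n.-1)%:R * (1 - mu) = n%:R * (m.-1)%:R / m%:R.
  rewrite !predn_natr ?(ltnW n2) ?(ltnW m2) //.
  have : (n%:R - 1) * mu = c - 1 by rewrite -hc1 predn_natr //; ring.
  rewrite cE => h.
  rewrite mulrBr mulr1 h; field.
  by [].
exists mu, c; split => //.
have pn : (0 : C) < (n.-1)%:R by rewrite ltr0n -ltnS prednK.
have -> : 1 - mu = (n%:R * (m.-1)%:R / m%:R) / (n.-1)%:R.
  by rewrite -formula; field; rewrite gt_eqF.
rewrite divr_gt0 // divr_gt0 ?ltr0n //.
by rewrite mulr_gt0 ?ltr0n // -ltnS prednK.
Qed.

Lemma gram_unit n (mu : C) : (0 < n)%N -> 1 - mu != 0 -> 1 + (n.-1)%:R * mu != 0 ->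
  (1 - mu)%:M + mu *: Jmx C n \in unitmx.
Proof.
move=> n0 h1 hc.
rewrite predn_natr // in hc.
pose x := (1 - mu)^-1.
pose y := - mu / ((1 - mu) * (1 + (n%:R - 1) * mu)).
have := prodSJ n (1 - mu) mu x y.
have -> : (1 - mu) * x = 1 by rewrite /x mulfV.
have -> : (1 - mu) * y + mu * x + mu * y * n%:R = 0.
  by rewrite /x /y; field; rewrite h1 hc.
rewrite scale0r addr0 => h.
by case/mulmx1_unit: h.
Qed.

End S2.

Unset Implicit Arguments.

Theorem theorem2 (C : numClosedFieldType) (dA dB : nat)
  (hA : (0 < dA)%N) (hB : (0 < dB)%N)
  (PA : 'I_((minn dA dB) ^ 2) -> 'M[C]_dA)
  (PB : 'I_((minn dA dB) ^ 2) -> 'M[C]_dB)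
  (hPA : quantum_design PA /\ regular_r1 PA /\ coherent PA /\ degree1 PA)
  (hPB : quantum_design PB /\ regular_r1 PB /\ coherent PB /\ degree1 PB) :
  let d := minn dA dB in
  let D := maxn dA dB in
  let rho : 'M[C]_(dA * dB) := (d ^ 2)%:R^-1 *: \sum_k (PA k *t PB k) in
  let alpha : C := (sqrtC (D * d)%:R)^-1 in
  let beta : C := sqrtC (((D - 1)%:R / (D%:R * (d ^ 2 - 1)%:R)) *
                         ((d - 1)%:R / (d%:R * (d ^ 2 - 1)%:R))) in
  os_coefficients_are rho (alpha :: nseq (d ^ 2 - 1) beta).
Proof.
move=> d D rho alpha beta.
case: hPA => qA [rA [coA deA]]; case: hPB => qB [rB [coB deB]].
have dpos : (0 < d)%N by rewrite /d leq_min hA hB.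
have n0 : (0 < minn dA dB ^ 2)%N by rewrite expn_gt0 dpos.
have mA1 : dA = 1%N -> (minn dA dB ^ 2 = 1)%N by move=> e; rewrite e (minn_idPl hB).
have mB1 : dB = 1%N -> (minn dA dB ^ 2 = 1)%N by move=> e; rewrite e (minn_idPr hA).
have [muA [cA [hGA hcA cAE muA0 fA]]] := design_norm hA n0 mA1 qA rA coA deA.
have [muB [cB [hGB hcB cBE muB0 fB]]] := design_norm hB n0 mB1 qB rB coB deB.
set n := (minn dA dB ^ 2)%N in n0 mA1 mB1 qA rA coA deA qB rB coB deB
  muA cA hGA hcA cAE muA0 fA muB cB hGB hcB cBE muB0 fB *.
have nz : n%:R != 0 :> C by rewrite pnatr_eq0 -lt0n.
have dAz : dA%:R != 0 :> C by rewrite pnatr_eq0 -lt0n.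
have dBz : dB%:R != 0 :> C by rewrite pnatr_eq0 -lt0n.
have cA0 : 0 < cA by rewrite cAE divr_gt0 ?ltr0n.
have cB0 : 0 < cB by rewrite cBE divr_gt0 ?ltr0n.
pose GA := (1 - muA)%:M + muA *: Jmx C n.
pose GB := (1 - muB)%:M + muB *: Jmx C n.
have hA' k l : \tr (PA k *m PA l) = GA k l.
  rewrite hGA !mxE; case: eqP => _ /=; rewrite ?mulr1n ?mulr0n ?mulr1; ring.
have hB' k l : \tr (PB k *m PB l) = GB k l.
  rewrite hGB !mxE; case: eqP => _ /=; rewrite ?mulr1n ?mulr0n ?mulr1; ring.
have uGA : GA \in unitmx by apply: gram_unit; rewrite ?hcA ?gt_eqF.
have uGB : GB \in unitmx by apply: gram_unit; rewrite ?hcB ?gt_eqF.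
pose p := (n%:R ^+ 2)^-1 * ((1 - muB) * (1 - muA)) : C.
pose q := (n%:R ^+ 2)^-1 * ((1 - muB) * muA + muB * (1 - muA) + muB * muA * n%:R) : C.
have hT : (n%:R ^+ 2)^-1 *: (GB *m GA) = p%:M + q *: Jmx C n.
  by rewrite /GA /GB prodSJ scalerDr scale_scalar_mx scalerA.
have cA' : 1 - muA + n%:R * muA = n%:R / dA%:R.
  by rewrite -cAE -hcA predn_natr //; ring.
have cB' : 1 - muB + n%:R * muB = n%:R / dB%:R.
  by rewrite -cBE -hcB predn_natr //; ring.
have dD : (D * d = dA * dB)%N.
  rewrite /D /d; case: (leqP dA dB) => h.
    by rewrite mulnC.
  by [].
have al0 : 0 <= alpha by rewrite invr_ge0 sqrtC_ge0 ler0n.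
have hal2 : alpha ^+ 2 = p + n%:R * q.
  rewrite /alpha exprVn sqrtCK dD natrM.
  have -> : p + n%:R * q = (n%:R ^+ 2)^-1 * ((1 - muB + n%:R * muB) * (1 - muA + n%:R * muA)).
    by rewrite /p /q; ring.
  rewrite cA' cB'; field.
  by rewrite dAz dBz nz.
have be0 : 0 <= beta.
  rewrite sqrtC_ge0 mulr_ge0 // divr_ge0 ?ler0n // mulr_ge0 ?ler0n //.
have hbe2 : (1 < n)%N -> beta ^+ 2 = p.
  move=> n2.
  have n1z : (n.-1)%:R != 0 :> C by rewrite pnatr_eq0 -lt0n -ltnS prednK.
  have eA : 1 - muA = n%:R * (dA.-1)%:R / (dA%:R * (n.-1)%:R).
    apply: (mulfI n1z); rewrite fA; field; by rewrite n1z dAz.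
  have eB : 1 - muB = n%:R * (dB.-1)%:R / (dB%:R * (n.-1)%:R).
    apply: (mulfI n1z); rewrite fB; field; by rewrite n1z dBz.
  rewrite /beta sqrtCK /p eA eB !subn1 -/n.
  rewrite /D /d -/n; case: (leqP dA dB) => h.
    field; by rewrite n1z dAz dBz nz.
  field; by rewrite n1z dAz dBz nz.
have uniq : forall lam G H, os_decomposition rho lam G H ->
    perm_eq [seq lam k | k <- enum 'I_n] (alpha :: nseq (n - 1) beta).
  move=> lam G H [lam0 [[_ oG] [[_ oH] hrho]]].
  have [U [uU hU]] := uniq_core n0 hA' hB' uGA uGB oG oH hrho.
  rewrite hT in hU.
  have [hfac hsum] := spec_count uU hU.
  set L := [seq lam k | k <- enum 'I_n].
  have sL : size L = n by rewrite size_map size_enum_ord.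
  rewrite subn1 -sL; apply: seq_perm => //; rewrite ?sL //.
  - move=> x /mapP [i _ ->]; split => //.
    case: (ltnP 1 n) => n2.
      have := hfac i; move/eqP; rewrite mulf_eq0 !subr_eq0 -hal2 -(hbe2 n2).
      by case/orP => /eqP ->; [left|right].
    left; rewrite hal2.
    have n1 : n = 1%N by apply/eqP; rewrite eqn_leq n2 n0.
    move: hsum; rewrite (bigD1 i) //= big1 ?addr0.
      by rewrite n1 !mul1r.
    move=> j ji; exfalso; move: ji; apply/negP; rewrite negbK.
    have h1 : (val i < 1)%N by case: i {hfac} => k hk; rewrite /= -n1.
    have h2 : (val j < 1)%N by case: j => k hk; rewrite /= -n1.
    apply/eqP/val_inj => /=; move: h1 h2; rewrite !ltnS !leqn0 => /eqP -> /eqP ->; done.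
  - rewrite big_map big_enum /= hsum hal2.
    case: (ltnP 1 n) => n2.
      rewrite (hbe2 n2) predn_natr //; ring.
    have n1 : n = 1%N by apply/eqP; rewrite eqn_leq n2 n0.
    rewrite n1 /=; ring.
split; last exact: uniq.
pose i0 : 'I_n := Ordinal n0.
have [O [Or Os Oo Or1]] := householder C i0.
have hermA k : Defs.hermitian (PA k) by case: (qA k).
have hermB k : Defs.hermitian (PB k) by case: (qB k).
have [hGA1 hGA2] := build_G hermA hGA hcA n0 cA0 muA0 Or Os Oo Or1.
have [hGB1 hGB2] := build_G hermB hGB hcB n0 cB0 muB0 Or Os Oo Or1.
set sA := fun j => if j == i0 then sqrtC cA else sqrtC (1 - muA).
set sB := fun j => if j == i0 then sqrtC cB else sqrtC (1 - muB).
have sA0 j : 0 <= sA j.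
  by rewrite /sA; case: (j == i0); rewrite sqrtC_ge0 ltW.
have sB0 j : 0 <= sB j.
  by rewrite /sB; case: (j == i0); rewrite sqrtC_ge0 ltW.
have sAz j : sA j != 0.
  by rewrite /sA; case: (j == i0); rewrite sqrtC_eq0 gt_eqF.
have sBz j : sB j != 0.
  by rewrite /sB; case: (j == i0); rewrite sqrtC_eq0 gt_eqF.
pose lam := fun j => sA j * sB j / n%:R.
have dec : os_decomposition rho lam
    (fun j => (sA j)^-1 *: \sum_k O j k *: PA k)
    (fun j => (sB j)^-1 *: \sum_k O j k *: PB k).
  split; first by move=> k; rewrite /lam divr_ge0 ?mulr_ge0 ?ler0n.
  split; first by split.
  split; first by split.
  exact: build_dec.
by exists lam, (fun j => (sA j)^-1 *: \sum_k O j k *: PA k),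
  (fun j => (sB j)^-1 *: \sum_k O j k *: PB k); split => //; apply: uniq dec.
Qed.
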